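(* In the process algebra $\mathcal{G}$ described in the context, let $\mathbb{U}=U_{i_1}U_{i_2}\cdots U_{i_l}$ and $\mathbb{V}=V_{j_1}V_{j_2}\cdots V_{j_r}$ with all $i_s,j_s\in\mathcal{N}$, let $B\in\{\epsilon,Z,G_v\}$, let $\mathbb{P}$ be any sequential composition (possibly empty) of constants from $\{U_k,V_k:k\in\mathcal{N}\}$, and let $\approxeq\;\in\{\simeq,\approx\}$. Then: (1) $I\|B\mathbb{P}\mathbb{U}\approxeq I\|B\mathbb{P}\mathbb{V}$ if and only if $u_{i_1}u_{i_2}\cdots u_{i_l}=v_{j_1}v_{j_2}\cdots v_{j_r}$; (2) $S\|B\mathbb{P}\mathbb{U}\approxeq S\|B\mathbb{P}\mathbb{V}$ if and only if the index sequences coincide: $i_1i_2\cdots i_l=j_1j_2\cdots j_r$.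
   Context: Process algebras: a triple $(\mathcal{C},\mathcal{A},\Delta)$ of finitely many constants, actions (including silent $\tau$) and rules $X\stackrel{\ell}{\longrightarrow}P$. Processes: $P::=\epsilon\mid X\mid PP'\mid P\|P'$, sequential composition associative, parallel composition associative and commutative, $\epsilon$ a unit for both. Semantics: rules of $\Delta$; if $P\stackrel{\ell}{\longrightarrow}P'$ then $PQ\stackrel{\ell}{\longrightarrow}P'Q$, $P\|Q\stackrel{\ell}{\longrightarrow}P'\|Q$, $Q\|P\stackrel{\ell}{\longrightarrow}Q\|P'$. $\Longrightarrow$ is the reflexive transitive closure of $\stackrel{\tau}{\longrightarrow}$; $\stackrel{\widehat{\ell}}{\Longrightarrow}$ is $\Longrightarrow\stackrel{\ell}{\longrightarrow}\Longrightarrow$ if $\ell\ne\tau$ and $\Longrightarrow$ if $\ell=\tau$. Weak bisimilarity $\approx$ is the largest relation $\mathcal{B}$ such that whenever $P\mathcal{B}Q$ and $P\stackrel{\ell}{\longrightarrow}P'$ there is $Q'$ with $Q\stackrel{\widehat{\ell}}{\Longrightarrow}Q'$, $P'\mathcal{B}Q'$, and symmetrically. Branching bisimilarity $\simeq$ is the largest relation $\mathcal{B}$ such that whenever $P\mathcal{B}Q$ and $P\stackrel{\ell}{\longrightarrow}P'$, either $Q\Longrightarrow Q''\stackrel{\ell}{\longrightarrow}Q'$ with $P\mathcal{B}Q''$ and $P'\mathcal{B}Q'$, or $\ell=\tau$ and $P'\mathcal{B}Q$; and symmetrically. The algebra $\mathcal{G}$: fix a finite alphabet $\Sigma$ with $|\Sigma|\ge2$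 and a Post Correspondence instance $\mathrm{INST}=\{(u_1,v_1),\dots,(u_n,v_n)\}$ with $u_k,v_k\in\Sigma^{+}$; let $\mathcal{N}=\{1,\dots,n\}$. Actions: $\{\lambda_U,\lambda_V,\lambda_D,\lambda_I,\lambda_S,\lambda_Z\}\cup\mathcal{N}\cup\Sigma\cup\{\tau\}$. Constants: $X,Y,Z,I,S,C,C',D,G,G',G_u,G_v,G_v'$, $U_k,V_k$ ($k\in\mathcal{N}$), and $W(\omega,k),W(\omega,0)$ for $k\in\mathcal{N}$ and $\omega$ a (possibly empty) suffix of $u_k$ or of $v_k$; $\mathcal{W}$ is the set of these $W$-constants. Rules (with $k$ ranging over $\mathcal{N}$, $a$ over $\Sigma$, $W$ over $\mathcal{W}$): $X\stackrel{\lambda_U}{\longrightarrow}D\|G_v$, $X\stackrel{\tau}{\longrightarrow}D$, $Y\stackrel{\tau}{\longrightarrow}D$, $D\stackrel{\tau}{\longrightarrow}D\|G_u$, $D\stackrel{\lambda_D}{\longrightarrow}C$; $G_u\stackrel{\tau}{\longrightarrow}G_uU_k$, $G_u\stackrel{\lambda_U}{\longrightarrow}G_vU_k$, $G_u\stackrel{\tau}{\longrightarrow}G_v'$, $G_v'\stackrel{\tau}{\longrightarrow}G_v'V_k$, $G_v'\stackrel{\tau}{\longrightarrow}Z$; $G_v\stackrel{\tau}{\longrightarrow}G_vV_k$, $G_v\stackrel{\tau}{\longrightarrow}\epsilon$, $G_v\stackrel{\lambda_V}{\longrightarrow}Z$, $Z\stackrel{\tau}{\longrightarrow}\epsilon$,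 $Z\stackrel{\lambda_Z}{\longrightarrow}\epsilon$; $C\stackrel{\lambda_I}{\longrightarrow}I$, $C\stackrel{\lambda_S}{\longrightarrow}S$, $C\stackrel{\tau}{\longrightarrow}C\|G$, $C\stackrel{\tau}{\longrightarrow}C\|G_v$; $G\stackrel{\tau}{\longrightarrow}GU_k$, $G\stackrel{\tau}{\longrightarrow}GV_k$, $G\stackrel{\tau}{\longrightarrow}\epsilon$; $I\stackrel{\lambda_I}{\longrightarrow}C'$, $I\stackrel{k}{\longrightarrow}I$, $S\stackrel{\lambda_S}{\longrightarrow}C'$, $S\stackrel{a}{\longrightarrow}S$, $C'\stackrel{\tau}{\longrightarrow}C'\|G'$, $C'\stackrel{\tau}{\longrightarrow}\epsilon$; $G'\stackrel{\tau}{\longrightarrow}G'U_k$, $G'\stackrel{\tau}{\longrightarrow}G'V_k$, $G'\stackrel{\tau}{\longrightarrow}G'W$, $G'\stackrel{\tau}{\longrightarrow}G_v$, $G'\stackrel{\tau}{\longrightarrow}Z$; $U_k\stackrel{\tau}{\longrightarrow}W(u_k,k)$, $V_k\stackrel{\tau}{\longrightarrow}W(v_k,k)$; $W(a\omega,k)\stackrel{a}{\longrightarrow}W(\omega,k)$, $W(a\omega,0)\stackrel{a}{\longrightarrow}W(\omega,0)$, $W(\omega,k)\stackrel{k}{\longrightarrow}W(\omega,0)$, $W(a\omega,k)\stackrel{\tau}{\longrightarrow}W(\omega,k)$, $W(a\omega,0)\stackrel{\tau}{\longrightarrow}W(\omega,0)$, $W(\omega,k)\stackrel{\tau}{\longrightarrow}W(\omega,0)$,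 $W(\epsilon,0)\stackrel{\tau}{\longrightarrow}\epsilon$. *)

(* Defs.v *)
From mathcomp Require Import all_boot.
Set Implicit Arguments. Unset Strict Implicit. Unset Printing Implicit Defensive.

Inductive act (Sg : Type) (n : nat) : Type :=
  | lU | lV | lD | lI | lS | lZ
  | aN of 'I_n
  | aL of Sg
  | tau.

(* Constants.  cW w None stands for W(w,0), cW w (Some k) for W(w,k). *)
Inductive const (Sg : Type) (n : nat) : Type :=
  | cX | cY | cZ | cI | cS | cC | cC' | cD | cG | cG' | cGu | cGv | cGv'
  | cU of 'I_n
  | cV of 'I_n
  | cW of seq Sg & option 'I_n.

Inductive proc (Sg : Type) (n : nat) : Type :=
  | Eps
  | Cst of const Sg n
  | Seq of proc Sg n & proc Sg n
  | Par of proc Sg n & proc Sg n.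

Arguments lU {Sg n}. Arguments lV {Sg n}. Arguments lD {Sg n}.
Arguments lI {Sg n}. Arguments lS {Sg n}. Arguments lZ {Sg n}.
Arguments tau {Sg n}.
Arguments cX {Sg n}. Arguments cY {Sg n}. Arguments cZ {Sg n}.
Arguments cI {Sg n}. Arguments cS {Sg n}. Arguments cC {Sg n}.
Arguments cC' {Sg n}. Arguments cD {Sg n}. Arguments cG {Sg n}.
Arguments cG' {Sg n}. Arguments cGu {Sg n}. Arguments cGv {Sg n}.
Arguments cGv' {Sg n}.
Arguments Eps {Sg n}. Arguments cU {Sg n}. Arguments cV {Sg n}. Arguments cW {Sg n}. Arguments aN {Sg n}. Arguments aL {Sg n}.

Inductive scong (Sg : Type) (n : nat) : proc Sg n -> proc Sg n -> Prop :=
  | sc_refl P : scong P P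
  | sc_sym P Q : scong P Q -> scong Q P
  | sc_trans P Q R : scong P Q -> scong Q R -> scong P R
  | sc_seq P P' Q Q' : scong P P' -> scong Q Q' -> scong (Seq P Q) (Seq P' Q')
  | sc_par P P' Q Q' : scong P P' -> scong Q Q' -> scong (Par P Q) (Par P' Q')
  | sc_seqA P Q R : scong (Seq (Seq P Q) R) (Seq P (Seq Q R))
  | sc_parA P Q R : scong (Par (Par P Q) R) (Par P (Par Q R))
  | sc_parC P Q : scong (Par P Q) (Par Q P)
  | sc_seq0l P : scong (Seq Eps P) P
  | sc_seq0r P : scong (Seq P Eps) P
  | sc_par0l P : scong (Par Eps P) P.

Section G.
Variables (Sg : eqType) (n : nat) (u v : 'I_n -> seq Sg).

Local Notation act := (act Sg n).
Local Notation const := (const Sg n).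
Local Notation proc := (proc Sg n).
Local Notation C c := (@Cst Sg n c).

Definition is_suffix (w w' : seq Sg) : Prop := exists p, w' = p ++ w.

Definition validW (w : seq Sg) : Prop :=
  exists k, is_suffix w (u k) \/ is_suffix w (v k).

Inductive rule : const -> act -> proc -> Prop :=
  | r_X1 : rule cX lU (Par (C cD) (C cGv))
  | r_X2 : rule cX tau (C cD)
  | r_Y : rule cY tau (C cD)
  | r_D1 : rule cD tau (Par (C cD) (C cGu))
  | r_D2 : rule cD lD (C cC)
  | r_Gu1 k : rule cGu tau (Seq (C cGu) (C (cU k)))
  | r_Gu2 k : rule cGu lU (Seq (C cGv) (C (cU k)))
  | r_Gu3 : rule cGu tau (C cGv')
  | r_Gv'1 k : rule cGv' tau (Seq (C cGv') (C (cV k)))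
  | r_Gv'2 : rule cGv' tau (C cZ)
  | r_Gv1 k : rule cGv tau (Seq (C cGv) (C (cV k)))
  | r_Gv2 : rule cGv tau Eps
  | r_Gv3 : rule cGv lV (C cZ)
  | r_Z1 : rule cZ tau Eps
  | r_Z2 : rule cZ lZ Eps
  | r_C1 : rule cC lI (C cI)
  | r_C2 : rule cC lS (C cS)
  | r_C3 : rule cC tau (Par (C cC) (C cG))
  | r_C4 : rule cC tau (Par (C cC) (C cGv))
  | r_G1 k : rule cG tau (Seq (C cG) (C (cU k)))
  | r_G2 k : rule cG tau (Seq (C cG) (C (cV k)))
  | r_G3 : rule cG tau Eps
  | r_I1 : rule cI lI (C cC')
  | r_I2 k : rule cI (aN k) (C cI)
  | r_S1 : rule cS lS (C cC')
  | r_S2 a : rule cS (aL a) (C cS)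
  | r_C'1 : rule cC' tau (Par (C cC') (C cG'))
  | r_C'2 : rule cC' tau Eps
  | r_G'1 k : rule cG' tau (Seq (C cG') (C (cU k)))
  | r_G'2 k : rule cG' tau (Seq (C cG') (C (cV k)))
  | r_G'3 w ko : validW w -> rule cG' tau (Seq (C cG') (C (cW w ko)))
  | r_G'4 : rule cG' tau (C cGv)
  | r_G'5 : rule cG' tau (C cZ)
  | r_U k : rule (cU k) tau (C (cW (u k) (Some k)))
  | r_V k : rule (cV k) tau (C (cW (v k) (Some k)))
  | r_W1 a w ko : validW (a :: w) -> rule (cW (a :: w) ko) (aL a) (C (cW w ko))
  | r_W2 w k : validW w -> rule (cW w (Some k)) (aN k) (C (cW w None))
  | r_W3 a w ko : validW (a :: w) -> rule (cW (a :: w) ko) tau (C (cW w ko))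
  | r_W4 w k : validW w -> rule (cW w (Some k)) tau (C (cW w None))
  | r_W5 : rule (cW [::] None) tau Eps.

Inductive step : proc -> act -> proc -> Prop :=
  | st_rule c l P : rule c l P -> step (C c) l P
  | st_seq P l P' Q : step P l P' -> step (Seq P Q) l (Seq P' Q)
  | st_parl P l P' Q : step P l P' -> step (Par P Q) l (Par P' Q)
  | st_parr P l P' Q : step P l P' -> step (Par Q P) l (Par Q P')
  | st_cong P P1 l P2 P' :
      scong P P1 -> step P1 l P2 -> scong P2 P' -> step P l P'.

Inductive tsteps : proc -> proc -> Prop :=
  | ts_refl P : tsteps P P
  | ts_step P P' Q : step P tau P' -> tsteps P' Q -> tsteps P Q.

Definition wstep (P : proc) (l : act) (Q : proc) : Prop :=
  match l with
  | tau => tsteps P Q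
  | _ => exists P1 P2, [/\ tsteps P P1, step P1 l P2 & tsteps P2 Q]
  end.

Definition weak_bisimulation (B : proc -> proc -> Prop) : Prop :=
  forall P Q, B P Q ->
    (forall l P', step P l P' -> exists Q', wstep Q l Q' /\ B P' Q') /\
    (forall l Q', step Q l Q' -> exists P', wstep P l P' /\ B P' Q').

Definition branching_bisimulation (B : proc -> proc -> Prop) : Prop :=
  forall P Q, B P Q ->
    (forall l P', step P l P' ->
       (exists Q'' Q', [/\ tsteps Q Q'', step Q'' l Q', B P Q'' & B P' Q'])
       \/ (l = tau /\ B P' Q)) /\
    (forall l Q', step Q l Q' ->
       (exists P'' P', [/\ tsteps P P'', step P'' l P', B P'' Q & B P' Q'])
       \/ (l = tau /\ B P Q')).

(* The largest (weak / branching) bisimulation = union of all of them. *)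
Definition weakly_bisimilar (P Q : proc) : Prop :=
  exists B, weak_bisimulation B /\ B P Q.

Definition branching_bisimilar (P Q : proc) : Prop :=
  exists B, branching_bisimulation B /\ B P Q.

End G.

Definition seqp (Sg : Type) (n : nat) (cs : seq (const Sg n)) : proc Sg n :=
  foldr (fun c p => Seq (Cst c) p) Eps cs.

Definition UV (Sg : Type) (n : nat) (x : 'I_n + 'I_n) : const Sg n :=
  match x with inl k => cU k | inr k => cV k end.

(* Main.v *)
Require Import Defs.
From mathcomp Require Import all_boot.
From Stdlib Require Import Permutation.
Set Implicit Arguments. Unset Strict Implicit. Unset Printing Implicit Defensive.

Section NF.
Variables (Sg : eqType) (n : nat) (u v : 'I_n -> seq Sg).
Notation const := (const Sg n).
Notation proc := (proc Sg n).
Notation act := (act Sg n).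
Notation thread := (seq const).
Notation step := (step u v).
Notation rule := (rule u v).
Notation tsteps := (tsteps u v).

Definition sop (p q : option (seq thread)) : option (seq thread) :=
  match p, q with
  | Some [::], _ => q
  | _, Some [::] => p
  | Some [:: t], Some [:: t'] => Some [:: t ++ t']
  | _, _ => None
  end.

Definition opar (p q : option (seq thread)) : option (seq thread) :=
  match p, q with Some a, Some b => Some (a ++ b) | _, _ => None end.

Fixpoint nf (P : proc) : option (seq thread) :=
  match P with
  | Eps => Some [::]
  | Cst c => Some [:: [:: c]]
  | Seq P Q => sop (nf P) (nf Q)
  | Par P Q => opar (nf P) (nf Q)
  end.

Definition oeq (p q : option (seq thread)) : Prop :=
  match p, q with
  | Some a, Some b => Permutation a b
  | None, None => True
  | _, _ => False
  end.

Lemma oeq_refl p : oeq p p.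
Proof. by case: p => //= a; apply: Permutation_refl. Qed.
Lemma oeq_sym p q : oeq p q -> oeq q p.
Proof. by case: p; case: q => //= a b; apply: Permutation_sym. Qed.
Lemma oeq_trans p q r : oeq p q -> oeq q r -> oeq p r.
Proof. by case: p; case: q; case: r => //= a b c H1 H2; exact: (Permutation_trans H1 H2). Qed.

Lemma perm_shape (a b : seq thread) : Permutation a b ->
  (a = [::] /\ b = [::]) \/ (exists t, a = [:: t] /\ b = [:: t]) \/
  (exists t1 t2 r t1' t2' r', a = t1 :: t2 :: r /\ b = t1' :: t2' :: r').
Proof.
move=> H; have L := Permutation_length H.
case: a H L => [|t [|t2 r]]; case: b => [|t' [|t2' r']] //= H L.
- by left.
- right; left; exists t; split => //.
  by have := Permutation_length_1_inv H => ->.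
- by right; right; do 6 eexists.
Qed.

Ltac pshape H := have [[? ?]|[[? [? ?]]|[? [? [? [? [? [? [? ?]]]]]]]]] := perm_shape H; subst.

Lemma sop_oeq p p' q q' : oeq p p' -> oeq q q' -> oeq (sop p q) (sop p' q').
Proof.
case: p => [a|]; case: p' => [a'|] //=; last first.
  by move=> _; case: q => [b|]; case: q' => [b'|] //= H; pshape H.
move=> Ha; case: q => [b|]; case: q' => [b'|] //=; last by pshape Ha.
move=> H; pshape Ha; pshape H => //=; exact: Permutation_refl.
Qed.

Lemma sop_assoc p q r : sop (sop p q) r = sop p (sop q r).
Proof.
case: p => [[|a [|a2 p]]|]; case: q => [[|b [|b2 q]]|];
  case: r => [[|c [|c2 r]]|] //=; by rewrite catA.
Qed.

Lemma sop_nil_r p : sop p (Some [::]) = p.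
Proof. by case: p => [[|a [|a2 p]]|]. Qed.

Lemma opar_nil_r p : opar p (Some [::]) = p.
Proof. by case: p => //= a; rewrite cats0. Qed.

Lemma opar_oeq p p' q q' : oeq p p' -> oeq q q' -> oeq (opar p q) (opar p' q').
Proof.
by case: p; case: p' => //; case: q; case: q' => //= *; apply: Permutation_app.
Qed.

Lemma opar_comm p q : oeq (opar p q) (opar q p).
Proof. by case: p; case: q => //= *; apply: Permutation_app_comm. Qed.

Lemma opar_assoc p q r : opar (opar p q) r = opar p (opar q r).
Proof. by case: p; case: q; case: r => //= *; rewrite catA. Qed.


Lemma scong_oeq P Q : scong P Q -> oeq (nf P) (nf Q).
Proof.
elim=> {P Q} /=.
- move=> P; exact: oeq_refl.
- move=> P Q _; exact: oeq_sym.
- move=> P Q R _ H1 _; exact: oeq_trans.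
- move=> P P' Q Q' _ H1 _ H2; exact: sop_oeq.
- move=> P P' Q Q' _ H1 _ H2; exact: opar_oeq.
- move=> P Q R; rewrite sop_assoc; exact: oeq_refl.
- move=> P Q R; rewrite opar_assoc; exact: oeq_refl.
- move=> P Q; exact: opar_comm.
- move=> P; exact: oeq_refl.
- move=> P; rewrite sop_nil_r; exact: oeq_refl.
- move=> P; case: (nf P) => //= a; exact: Permutation_refl.
Qed.

Lemma sop_nil p q : sop p q = Some [::] -> p = Some [::] /\ q = Some [::].
Proof. by case: p => [[|a [|a2 p]]|]; case: q => [[|b [|b2 q]]|]. Qed.

Lemma opar_nil p q : opar p q = Some [::] -> p = Some [::] /\ q = Some [::].
Proof. by case: p => [[|a p]|]; case: q => [[|b q]|]. Qed.

Lemma nostep_nil P l P' : step P l P' -> nf P = Some [::] -> False.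
Proof.
elim=> {P l P'} /=.
- by [].
- by move=> P l P' Q _ IH /sop_nil [] /IH.
- by move=> P l P' Q _ IH /opar_nil [] /IH.
- by move=> P l P' Q _ IH /opar_nil [] _ /IH.
- move=> P P1 l P2 P' H1 _ IH _ E; have := scong_oeq H1; rewrite E.
  case E1: (nf P1) => [b|] //= Hp; apply: IH.
  by rewrite E1 (Permutation_nil Hp).
Qed.

Definition thr (t : thread) : seq thread := if t is [::] then [::] else [:: t].
Definition nemp (ts : seq thread) := all (fun t : thread => 0 < size t) ts.

Lemma nemp_perm a b : Permutation a b -> nemp a = nemp b.
Proof.
elim=> [//|x l l' _ IH|x y l|l l' l'' _ IH1 _ IH2] /=.
- by rewrite IH.
- by rewrite andbCA.
- by rewrite IH1.
Qed.

Lemma nemp_cat a b : nemp (a ++ b) = nemp a && nemp b.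
Proof. exact: all_cat. Qed.

Lemma nf_nemp P ts : nf P = Some ts -> nemp ts.
Proof.
elim: P ts => [|c|P IHP Q IHQ|P IHP Q IHQ] ts /=.
- by case=> <-.
- by case=> <-.
- case EP: (nf P) => [[|a [|a2 p]]|]; case EQ: (nf Q) => [[|b [|b2 q]]|] //= [<-] //;
   try (by apply: IHQ); try (by apply: IHP).
  have := IHP _ EP; have := IHQ _ EQ => /= /andP [Hb _] /andP [Ha _].
  by rewrite size_cat addn_gt0 Ha.
- case EP: (nf P) => [a|]; case EQ: (nf Q) => [b|] //= [<-].
  by rewrite nemp_cat (IHP _ EP) (IHQ _ EQ).
Qed.

Lemma sop_thr rest t' : 0 < size t' ->
  sop (Some (thr rest)) (Some [:: t']) = Some (thr (rest ++ t')).
Proof. by case: rest => //; case: t'. Qed.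

Lemma step_inv P l P' : step P l P' -> forall ts, nf P = Some ts ->
  exists c rest others R, [/\ Permutation ts ((c :: rest) :: others), rule c l R &
    oeq (nf P') (opar (sop (nf R) (Some (thr rest))) (Some others))].
Proof.
elim=> {P l P'}.
- move=> c l P H ts /= [<-]; exists c, [::], [::], P; split => //.
  rewrite /= sop_nil_r opar_nil_r; exact: oeq_refl.
- move=> P l P' Q Hs IH ts /=.
  case EP: (nf P) => [[|a [|a2 p]]|]; first by case: (nostep_nil Hs EP).
  + case EQ: (nf Q) => [[|b [|b2 q]]|] //= [<-].
      have [c [rest [others [R [Hp Hr Ho]]]]] := IH _ EP.
      exists c, rest, others, R; split => //.
      by rewrite sop_nil_r.
    have [c [rest [others [R [Hp Hr Ho]]]]] := IH _ EP.
    have := Permutation_length_1_inv Hp => [[Ea Eo]]; subst.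
    exists c, (rest ++ b), [::], R; split => //.
    rewrite opar_nil_r in Ho; rewrite opar_nil_r.
    have Hb : 0 < size b by have := nf_nemp EQ => /= /andP [].
    rewrite -sop_thr // -sop_assoc; apply: sop_oeq => //; exact: oeq_refl.
  + case EQ: (nf Q) => [[|b [|b2 q]]|] //= [<-].
    have [c [rest [others [R [Hp Hr Ho]]]]] := IH _ EP.
    exists c, rest, others, R; split => //.
    by rewrite sop_nil_r.
  + by case: (nf Q) => [[|b [|b2 q]]|].
- move=> P l P' Q Hs IH ts /=.
  case EP: (nf P) => [a|] //; case EQ: (nf Q) => [b|] //= [<-].
  have [c [rest [others [R [Hp Hr Ho]]]]] := IH _ EP.
  exists c, rest, (others ++ b), R; split => //.
    exact: (Permutation_app_tail b Hp).
  have -> : Some (others ++ b) = opar (Some others) (Some b) by [].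
  rewrite -opar_assoc; apply: opar_oeq => //; exact: oeq_refl.
- move=> P l P' Q Hs IH ts /=.
  case EP: (nf P) => [a|] //; case EQ: (nf Q) => [b|] //= [<-].
  have [c [rest [others [R [Hp Hr Ho]]]]] := IH _ EP.
  exists c, rest, (others ++ b), R; split => //.
    apply: Permutation_trans (Permutation_app_comm _ _) _.
    exact: (Permutation_app_tail b Hp).
  change (oeq (opar (Some b) (nf P')) (opar (sop (nf R) (Some (thr rest))) (Some (others ++ b)))).
  apply: (oeq_trans (opar_comm _ _)).
  have -> : Some (others ++ b) = opar (Some others) (Some b) by [].
  rewrite -opar_assoc; apply: opar_oeq => //; exact: oeq_refl.
- move=> P P1 l P2 P' H1 Hs IH H2 ts E.
  have := scong_oeq H1; rewrite E; case E1: (nf P1) => [ts1|] //= Hp.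
  have [c [rest [others [R [Hp' Hr Ho]]]]] := IH _ E1.
  exists c, rest, others, R; split => //.
    exact: Permutation_trans Hp Hp'.
  apply: oeq_trans Ho; apply: oeq_sym; exact: scong_oeq.
Qed.


Definition mk (ts : seq thread) : proc :=
  foldr (fun t acc => Par (seqp t) acc) Eps ts.

Lemma sc_par_mk a b : scong (Par (mk a) (mk b)) (mk (a ++ b)).
Proof.
elim: a => [|t a IH] /=; first exact: sc_par0l.
apply: sc_trans (sc_parA _ _ _) _.
apply: sc_par => //; exact: sc_refl.
Qed.

Lemma sc_seq_seqp (t t' : thread) : scong (Seq (seqp t) (seqp t')) (seqp (t ++ t')).
Proof.
elim: t => [|c t IH] /=; first exact: sc_seq0l.
apply: sc_trans (sc_seqA _ _ _) _.
apply: sc_seq => //; exact: sc_refl.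
Qed.

Lemma sc_mk1 t : scong (mk [:: t]) (seqp t).
Proof. apply: sc_trans (sc_parC _ _) _; exact: sc_par0l. Qed.

Lemma nf_mk_sc P ts : nf P = Some ts -> scong P (mk ts).
Proof.
elim: P ts => [|c|P IHP Q IHQ|P IHP Q IHQ] ts /=.
- case=> <-; exact: sc_refl.
- case=> <- /=; apply: sc_sym; apply: sc_trans (sc_parC _ _) _.
  apply: sc_trans (sc_par0l _) _; exact: sc_seq0r.
- case EP: (nf P) => [[|a [|a2 p]]|]; case EQ: (nf Q) => [[|b [|b2 q]]|] //= [<-];
   try (apply: sc_trans (sc_seq (IHP _ EP) (sc_refl Q)) _;
        apply: sc_trans (sc_seq0l _) _; by apply: IHQ);
   try (apply: sc_trans (sc_seq (sc_refl P) (IHQ _ EQ)) _;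
        apply: sc_trans (sc_seq0r _) _; by apply: IHP).
  apply: sc_trans (sc_seq (sc_trans (IHP _ EP) (sc_mk1 a)) (sc_trans (IHQ _ EQ) (sc_mk1 b))) _.
  apply: sc_trans (sc_seq_seqp _ _) _; apply: sc_sym; exact: sc_mk1.
- case EP: (nf P) => [a|]; case EQ: (nf Q) => [b|] //= [<-].
  apply: sc_trans (sc_par (IHP _ EP) (IHQ _ EQ)) _; exact: sc_par_mk.
Qed.

Lemma perm_mk a b : Permutation a b -> scong (mk a) (mk b).
Proof.
elim=> [|x l l' _ IH|x y l|l l' l'' _ IH1 _ IH2] /=.
- exact: sc_refl.
- apply: sc_par => //; exact: sc_refl.
- apply: sc_trans (sc_sym (sc_parA _ _ _)) _.
  apply: sc_trans (sc_par (sc_parC _ _) (sc_refl _)) _; exact: sc_parA.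
- exact: sc_trans IH1 IH2.
Qed.

Lemma nf_seqp t : nf (seqp t) = Some (thr t).
Proof. by elim: t => [|c t IH] //=; rewrite IH; case: t {IH}. Qed.

Lemma nf_mk ts : nemp ts -> nf (mk ts) = Some ts.
Proof.
elim: ts => [|t ts IH] //= /andP [Ht /IH]; rewrite nf_seqp => ->.
by case: t Ht.
Qed.

Definition nfe (P : proc) (L : seq thread) := oeq (nf P) (Some L).

Lemma nfe_nemp P L : nfe P L -> nemp L.
Proof.
rewrite /nfe; case E: (nf P) => [ts|] //= H.
by rewrite -(nemp_perm H); exact: nf_nemp E.
Qed.

Lemma nfe_perm P L L' : nfe P L -> Permutation L L' -> nfe P L'.
Proof. by rewrite /nfe; case: (nf P) => //= ts H1 H2; apply: Permutation_trans H1 H2. Qed.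

Lemma nfe_sc P Q L : nfe P L -> nfe Q L -> scong P Q.
Proof.
rewrite /nfe; case EP: (nf P) => [a|] //; case EQ: (nf Q) => [b|] //= Ha Hb.
apply: sc_trans (nf_mk_sc EP) _; apply: sc_sym; apply: sc_trans (nf_mk_sc EQ) _.
apply: perm_mk; apply: Permutation_trans Hb _; exact: Permutation_sym.
Qed.

Lemma step_inv' P l P' L : step P l P' -> nfe P L ->
  exists c rest others R, [/\ Permutation L ((c :: rest) :: others), rule c l R &
    oeq (nf P') (opar (sop (nf R) (Some (thr rest))) (Some others))].
Proof.
move=> Hs; rewrite /nfe; case E: (nf P) => [ts|] //= Hp.
have [c [rest [others [R [H1 H2 H3]]]]] := step_inv Hs E.
exists c, rest, others, R; split => //.
apply: Permutation_trans H1; exact: Permutation_sym.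
Qed.

Lemma step_mk Q c rest others l R : nfe Q ((c :: rest) :: others) -> rule c l R ->
  exists Q', step Q l Q' /\ oeq (nf Q') (opar (sop (nf R) (Some (thr rest))) (Some others)).
Proof.
move=> HQ Hr; have Ho : nemp others by move: (nfe_nemp HQ); rewrite /nemp /=.
rewrite /nfe in HQ; case E: (nf Q) HQ => [ts|] //= Hp.
exists (Par (Seq R (seqp rest)) (mk others)); split.
  have H1 : scong Q (Par (Seq (Cst c) (seqp rest)) (mk others)).
    exact: (sc_trans (nf_mk_sc E) (perm_mk Hp)).
  apply: (st_cong H1); last exact: sc_refl.
  by apply: st_parl; apply: st_seq; apply: st_rule.
by rewrite /= nf_seqp nf_mk //; apply: oeq_refl.
Qed.


Definition ctx (m : bool) : const := if m then cI else cS.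

Definition obs (m : bool) (e : const) : seq act :=
  match e with
  | cU k => if m then map aL (u k) else [:: aN k]
  | cV k => if m then map aL (v k) else [:: aN k]
  | cW w ko => if m then map aL w else (if ko is Some k then [:: aN k] else [::])
  | _ => [::]
  end.
Definition obsw m (t : thread) := flatten (map (obs m) t).

Definition plainc (e : const) : Prop :=
  match e with cU _ => True | cV _ => True | cW w _ => validW u v w | _ => False end.
Fixpoint plain (t : thread) : Prop := if t is e :: t' then plainc e /\ plain t' else True.

Lemma plain_cat a b : plain (a ++ b) <-> plain a /\ plain b.
Proof. elim: a => [|e a IH] /=; [tauto | rewrite IH; tauto]. Qed.

Lemma validW_tl a w : validW u v (a :: w) -> validW u v w.
Proof.
case=> k [[p E]|[p E]]; exists k; [left|right]; exists (rcons p a);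
  by rewrite E cat_rcons.
Qed.
Lemma validW_u k : validW u v (u k).
Proof. by exists k; left; exists [::]. Qed.
Lemma validW_v k : validW u v (v k).
Proof. by exists k; right; exists [::]. Qed.

Lemma res_cst d rest others :
  opar (sop (nf (Cst d)) (Some (thr rest))) (Some others) = Some ((d :: rest) :: others).
Proof. by case: rest. Qed.
Lemma res_seq2 d1 d2 rest others :
  opar (sop (nf (Seq (Cst d1) (Cst d2))) (Some (thr rest))) (Some others) =
  Some ((d1 :: d2 :: rest) :: others).
Proof. by case: rest. Qed.
Lemma res_eps rest others :
  opar (sop (nf Eps) (Some (thr rest))) (Some others) = Some (thr rest ++ others).
Proof. by []. Qed.
Lemma res_par d1 d2 others :
  opar (sop (nf (Par (Cst d1) (Cst d2))) (Some (thr [::]))) (Some others) =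
  Some ([:: d1] :: [:: d2] :: others).
Proof. by []. Qed.

Lemma mv_c Q c rest others l d : nfe Q ((c :: rest) :: others) -> rule c l (Cst d) ->
  exists Q', step Q l Q' /\ nfe Q' ((d :: rest) :: others).
Proof. by move=> H1 H2; have [Q' [H3 H4]] := step_mk H1 H2; exists Q'; rewrite /nfe -res_cst. Qed.
Lemma mv_s Q c rest others l d1 d2 : nfe Q ((c :: rest) :: others) ->
  rule c l (Seq (Cst d1) (Cst d2)) ->
  exists Q', step Q l Q' /\ nfe Q' ((d1 :: d2 :: rest) :: others).
Proof. by move=> H1 H2; have [Q' [H3 H4]] := step_mk H1 H2; exists Q'; rewrite /nfe -res_seq2. Qed.
Lemma mv_e Q c rest others l : nfe Q ((c :: rest) :: others) -> rule c l Eps ->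
  exists Q', step Q l Q' /\ nfe Q' (thr rest ++ others).
Proof. by move=> H1 H2; have [Q' [H3 H4]] := step_mk H1 H2; exists Q'; rewrite /nfe -res_eps. Qed.
Lemma mv_p Q c others l d1 d2 : nfe Q ([:: c] :: others) -> rule c l (Par (Cst d1) (Cst d2)) ->
  exists Q', step Q l Q' /\ nfe Q' ([:: d1] :: [:: d2] :: others).
Proof. by move=> H1 H2; have [Q' [H3 H4]] := step_mk H1 H2; exists Q'; rewrite /nfe -res_par. Qed.

Lemma ts_one P P' : step P tau P' -> tsteps P P'.
Proof. by move=> H; apply: ts_step H (ts_refl _ _ _). Qed.
Lemma ts_trans P Q R : tsteps P Q -> tsteps Q R -> tsteps P R.
Proof. elim=> // P0 P1 Q0 H _ IH HR; apply: ts_step H (IH HR). Qed.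

Lemma perm_sw (a b : thread) l : Permutation (a :: b :: l) (b :: a :: l).
Proof. exact: perm_swap. Qed.

Lemma killWN w rest others Q : validW u v w -> nfe Q ((cW w None :: rest) :: others) ->
  exists Q', tsteps Q Q' /\ nfe Q' (thr rest ++ others).
Proof.
elim: w Q => [|a w IH] Q Hv HQ.
  have [Q' [H1 H2]] := mv_e HQ (r_W5 u v); exists Q'; split => //; exact: ts_one.
have [Q1 [H1 H2]] := mv_c HQ (r_W3 None Hv).
have [Q' [H3 H4]] := IH _ (validW_tl Hv) H2; exists Q'; split => //.
exact: ts_step H1 H3.
Qed.

Lemma killW w ko rest others Q : validW u v w -> nfe Q ((cW w ko :: rest) :: others) ->
  exists Q', tsteps Q Q' /\ nfe Q' (thr rest ++ others).
Proof.
case: ko => [k|]; last exact: killWN.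
move=> Hv HQ; have [Q1 [H1 H2]] := mv_c HQ (r_W4 k Hv).
have [Q' [H3 H4]] := killWN Hv H2; exists Q'; split => //; exact: ts_step H1 H3.
Qed.

Lemma killE e rest others Q : plainc e -> nfe Q ((e :: rest) :: others) ->
  exists Q', tsteps Q Q' /\ nfe Q' (thr rest ++ others).
Proof.
move=> He HQ; destruct e as [| | | | | | | | | | | | |k|k|w ko]; try done; last exact: (killW He HQ).
- have [Q1 [H1 H2]] := mv_c HQ (r_U u v k).
  have [Q' [H3 H4]] := killW (validW_u k) H2; exists Q'; split => //; exact: ts_step H1 H3.
- have [Q1 [H1 H2]] := mv_c HQ (r_V u v k).
  have [Q' [H3 H4]] := killW (validW_v k) H2; exists Q'; split => //; exact: ts_step H1 H3.
Qed.

Lemma killT t others Q : plain t -> nfe Q (thr t ++ others) ->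
  exists Q', tsteps Q Q' /\ nfe Q' others.
Proof.
elim: t Q => [|e t IH] Q /=; first by move=> _ HQ; exists Q; split => //; exact: ts_refl.
move=> [He Ht] HQ; have [Q1 [H1 H2]] := killE He HQ.
have [Q' [H3 H4]] := IH _ Ht H2; exists Q'; split => //; exact: ts_trans H1 H3.
Qed.

Definition good (t : thread) : Prop :=
  plain t \/ exists h t', t = h :: t' /\ (h = cGv \/ h = cZ \/ h = cG') /\ plain t'.
Definition goodn (t : thread) : Prop := 0 < size t /\ good t.
Fixpoint allg (gs : seq thread) : Prop := if gs is g :: gs' then goodn g /\ allg gs' else True.

Lemma allg_cat a b : allg (a ++ b) <-> allg a /\ allg b.
Proof. elim: a => [|e a IH] /=; [tauto | rewrite IH; tauto]. Qed.

Lemma allg_perm a b : Permutation a b -> allg a -> allg b.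
Proof. elim=> //= [x l l' _ IH [H1 H2] | x y l [H1 [H2 H3]] | l l' l'' _ IH1 _ IH2 H]; tauto. Qed.

Lemma thr_ne t : 0 < size t -> thr t = [:: t].
Proof. by case: t. Qed.

Lemma allg_thr t : good t -> allg (thr t).
Proof. by case: t => //= e t H; split. Qed.

Lemma killG g others Q : goodn g -> nfe Q (g :: others) ->
  exists Q', tsteps Q Q' /\ nfe Q' others.
Proof.
move=> [Hs [Hp|[h [t [Eg [Hh Ht]]]]]] HQ.
  by apply: killT Hp _; rewrite thr_ne.
subst g.
case: Hh => [E|[E|E]]; subst h.
- have [Q1 [H1 H2]] := mv_e HQ (r_Gv2 u v).
  have [Q' [H3 H4]] := killT Ht H2; exists Q'; split => //; exact: ts_step H1 H3.
- have [Q1 [H1 H2]] := mv_e HQ (r_Z1 u v).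
  have [Q' [H3 H4]] := killT Ht H2; exists Q'; split => //; exact: ts_step H1 H3.
- have [Q1 [H1 H2]] := mv_c HQ (r_G'5 u v).
  have [Q2 [H1' H2']] := mv_e H2 (r_Z1 u v).
  have [Q' [H3 H4]] := killT Ht H2'; exists Q'; split => //.
  exact: ts_step H1 (ts_step H1' H3).
Qed.

Lemma killAll hs Q : allg hs -> nfe Q ([:: cC'] :: hs) ->
  exists Q', tsteps Q Q' /\ nfe Q' [:: [:: cC']].
Proof.
elim: hs Q => [|h hs IH] Q /=; first by move=> _ HQ; exists Q; split => //; exact: ts_refl.
move=> [Hh Hs] HQ; have HQ' := nfe_perm HQ (perm_sw _ _ _).
have [Q1 [H1 H2]] := killG Hh HQ'.
have [Q' [H3 H4]] := IH _ Hs H2; exists Q'; split => //; exact: ts_trans H1 H3.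
Qed.

Lemma buildG t others Q : plain t -> nfe Q ([:: cG'] :: others) ->
  exists Q', tsteps Q Q' /\ nfe Q' ((cG' :: t) :: others).
Proof.
elim: t => [|e t IH] /=; first by move=> _ HQ; exists Q; split => //; exact: ts_refl.
move=> [He Ht] HQ; have [Q1 [H1 H2]] := IH Ht HQ.
have [Q' [H3 H4]] : exists Q', step Q1 tau Q' /\ nfe Q' ((cG' :: e :: t) :: others).
  destruct e as [| | | | | | | | | | | | |k|k|w ko]; try done.
  - exact: mv_s H2 (r_G'1 u v k).
  - exact: mv_s H2 (r_G'2 u v k).
  - exact: mv_s H2 (r_G'3 ko He).
exists Q'; split => //; apply: ts_trans H1 (ts_one H3).
Qed.

Lemma spawn g hs Q : goodn g -> nfe Q ([:: cC'] :: hs) ->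
  exists Q', tsteps Q Q' /\ nfe Q' ([:: cC'] :: g :: hs).
Proof.
move=> [Hs Hg] HQ.
have [Q1 [H1 H2]] := mv_p HQ (r_C'1 u v).
have H2' := nfe_perm H2 (perm_sw _ _ _).
have fin : forall Q2, tsteps Q1 Q2 -> nfe Q2 (g :: [:: cC'] :: hs) ->
    exists Q', tsteps Q Q' /\ nfe Q' ([:: cC'] :: g :: hs).
  move=> Q2 T2 N2; exists Q2; split; first exact: ts_step H1 T2.
  exact: nfe_perm N2 (perm_sw _ _ _).
case: Hg => [Hp|[h [t [Eg [Hh Ht]]]]].
  have [Q2 [T2 N2]] := buildG Hp H2'.
  have [Q3 [T3 N3]] := mv_c N2 (r_G'5 u v).
  have [Q4 [T4 N4]] := mv_e N3 (r_Z1 u v).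
  apply: (fin Q4); first exact: ts_trans T2 (ts_step T3 (ts_one T4)).
  by rewrite thr_ne in N4.
subst g; have [Q2 [T2 N2]] := buildG Ht H2'.
case: Hh => [E|[E|E]]; subst h.
- have [Q3 [T3 N3]] := mv_c N2 (r_G'4 u v).
  apply: (fin Q3) => //; exact: ts_trans T2 (ts_one T3).
- have [Q3 [T3 N3]] := mv_c N2 (r_G'5 u v).
  apply: (fin Q3) => //; exact: ts_trans T2 (ts_one T3).
- exact: fin N2.
Qed.

Lemma spawnAll gs Q : allg gs -> nfe Q [:: [:: cC']] ->
  exists Q', tsteps Q Q' /\ nfe Q' ([:: cC'] :: gs).
Proof.
elim: gs Q => [|g gs IH] Q /=; first by move=> _ HQ; exists Q; split => //; exact: ts_refl.
move=> [Hg Hs] HQ; have [Q1 [H1 H2]] := IH _ Hs HQ.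
have [Q' [H3 H4]] := spawn Hg H2; exists Q'; split => //; exact: ts_trans H1 H3.
Qed.

Lemma rebuild hs gs Q : allg hs -> allg gs -> nfe Q ([:: cC'] :: hs) ->
  exists Q', tsteps Q Q' /\ nfe Q' ([:: cC'] :: gs).
Proof.
move=> Hh Hg HQ; have [Q1 [H1 H2]] := killAll Hh HQ.
have [Q' [H3 H4]] := spawnAll Hg H2; exists Q'; split => //; exact: ts_trans H1 H3.
Qed.


Lemma gs_cst d rest others : allg [:: d :: rest] -> exists gs2,
  opar (sop (nf (Cst d)) (Some (thr rest))) (Some others) = Some (gs2 ++ others) /\ allg gs2.
Proof. by move=> H; exists [:: d :: rest]; rewrite res_cst. Qed.
Lemma gs_seq2 d1 d2 rest others : allg [:: d1 :: d2 :: rest] -> exists gs2,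
  opar (sop (nf (Seq (Cst d1) (Cst d2))) (Some (thr rest))) (Some others) =
  Some (gs2 ++ others) /\ allg gs2.
Proof. by move=> H; exists [:: d1 :: d2 :: rest]; rewrite res_seq2. Qed.
Lemma gs_eps rest others : good rest -> exists gs2,
  opar (sop (nf Eps) (Some (thr rest))) (Some others) = Some (gs2 ++ others) /\ allg gs2.
Proof. by move=> H; exists (thr rest); rewrite res_eps; split => //; apply: allg_thr. Qed.

Lemma good_step c rest l R others : good (c :: rest) -> rule c l R -> exists gs2,
  opar (sop (nf R) (Some (thr rest))) (Some others) = Some (gs2 ++ others) /\ allg gs2.
Proof.
move=> [[Hc Hr]|[h [t [[Eh Et] [Hh Ht]]]]] HR.
  destruct c as [| | | | | | | | | | | | |k|k|w ko]; try done; inversion HR; subst.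
  - by apply: gs_cst; split => //; split => //; left; split => //; apply: validW_u.
  - by apply: gs_cst; split => //; split => //; left; split => //; apply: validW_v.
  - by apply: gs_cst; split => //; split => //; left; split => //; apply: validW_tl Hc.
  - by apply: gs_cst; split => //; split => //; left; split.
  - by apply: gs_cst; split => //; split => //; left; split => //; apply: validW_tl Hc.
  - by apply: gs_cst; split => //; split => //; left; split.
  - by apply: gs_eps; left.
subst h t; case: Hh => [E|[E|E]]; subst c; inversion HR; subst.
- by apply: gs_seq2; split => //; split => //; right; exists cGv, (cV k :: rest); split => //; split; [left | split].
- by apply: gs_eps; left.
- by apply: gs_cst; split => //; split => //; right; exists cZ, rest; split => //; tauto.
- by apply: gs_eps; left.
- by apply: gs_eps; left.
- by apply: gs_seq2; split => //; split => //; right; exists cG', (cU k :: rest); split => //; split; [right; right | split].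
- by apply: gs_seq2; split => //; split => //; right; exists cG', (cV k :: rest); split => //; split; [right; right | split].
- by apply: gs_seq2; split => //; split => //; right; exists cG', (cW w ko :: rest); split => //; split; [right; right | split].
- by apply: gs_cst; split => //; split => //; right; exists cGv, rest; split => //; tauto.
- by apply: gs_cst; split => //; split => //; right; exists cZ, rest; split => //; tauto.
Qed.

Definition isK (P : proc) := exists gs, nfe P ([:: @cC' Sg n] :: gs) /\ allg gs.

Lemma perm_K (gs others : seq thread) (c : const) (rest : thread) : Permutation ([:: cC'] :: gs) ((c :: rest) :: others) ->
  (c = cC' /\ rest = [::] /\ Permutation others gs) \/
  (exists g1 g2, gs = g1 ++ (c :: rest) :: g2 /\ Permutation others ([:: cC'] :: g1 ++ g2)).
Proof.
move=> H.
have Hin : List.In (c :: rest) ([:: cC'] :: gs).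
  apply: Permutation_in (Permutation_sym H) _; exact: List.in_eq.
case: Hin => [[E1 E2]|Hin].
  subst; left; do 2 split => //; apply: Permutation_sym; exact: Permutation_cons_inv H.
right; have [g1 [g2 E]] := List.in_split _ _ Hin; subst gs.
exists g1, g2; split => //.
have H' := Permutation_sym H.
exact: (@Permutation_cons_app_inv _ others ([:: cC'] :: g1) g2 (c :: rest) H').
Qed.

Lemma K_sim P Q l P' : isK P -> isK Q -> step P l P' ->
  (exists Q'' Q', [/\ tsteps Q Q'', step Q'' l Q', isK Q'' & (isK P' /\ isK Q') \/ scong P' Q'])
  \/ (l = tau /\ isK P').
Proof.
move=> [gs [HP Hgs]] [hs [HQ Hhs]] Hs.
have [c [rest [others [R [Hp Hr Ho]]]]] := step_inv' Hs HP.
case: (perm_K Hp) => [[Ec [Er Hpo]]|[g1 [g2 [Eg Hpo]]]].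
  subst c rest; inversion Hr; subst.
  - right; split => //; exists ([:: cG'] :: others); split.
      by rewrite /nfe -res_par.
    split; first by split => //; right; exists cG', [::]; split => //; split => //; right; right.
    by apply: allg_perm Hgs; apply: Permutation_sym.
  - left; have [Q'' [T1 N1]] := rebuild Hhs Hgs HQ.
    have [Q' [S1 N2]] := mv_e N1 (r_C'2 u v).
    exists Q'', Q'; split => //; first by exists gs.
    right; apply: (@nfe_sc _ _ gs); last by [].
    rewrite res_eps /= in Ho; exact: nfe_perm Ho Hpo.
subst gs; move: Hgs => /allg_cat [Hg1 /= [Hg Hg2]].
have Hgood : good (c :: rest) by case: Hg.
left; have [Q'' [T1 N1]] := spawn Hg HQ.
have N1' := nfe_perm N1 (perm_sw _ _ _).
have [Q' [S1 N2]] := step_mk N1' Hr.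
have [gs2 [E2 Hgs2]] := good_step ([:: cC'] :: hs) Hgood Hr.
have [gs3 [E3 Hgs3]] := good_step others Hgood Hr.
exists Q'', Q'; split => //.
  by exists ((c :: rest) :: hs); split.
left; split.
  exists (gs3 ++ g1 ++ g2); split.
    rewrite /nfe E3 in Ho; apply: nfe_perm Ho _.
    apply: Permutation_trans (Permutation_app_head _ Hpo) _.
    apply: Permutation_sym; exact: Permutation_middle.
  by apply/allg_cat; split => //; apply/allg_cat.
exists (gs2 ++ hs); split.
  rewrite /nfe E2 in N2; apply: nfe_perm N2 _.
  apply: Permutation_sym; exact: Permutation_middle.
by apply/allg_cat.
Qed.


Lemma wready m w ko o os1 l : validW u v w -> obs m (cW w ko) = o :: os1 -> (l = o \/ l = tau) ->
  exists w' ko', [/\ rule (cW w ko) l (Cst (cW w' ko')), validW u v w' & obs m (cW w' ko') = os1].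
Proof.
case: m => /=.
  case: w => [|a w1] //= Hv [Eo Eos]; subst o os1.
  by case=> ->; exists w1, ko; split => //; [apply: r_W1 | apply: validW_tl Hv | apply: r_W3 | apply: validW_tl Hv].
case: ko => [k|] //= Hv [Eo Eos]; subst o os1.
by case=> ->; exists w, None; split => //; [apply: r_W2 | apply: r_W4].
Qed.

Lemma advance m y (others : seq thread) Q o os : plain y -> obsw m y = o :: os ->
  nfe Q (y :: others) ->
  exists Q1 y1, [/\ tsteps Q Q1, nfe Q1 (y1 :: others), 0 < size y1 /\ plain y1,
    obsw m y1 = o :: os &
    forall l, l = o \/ l = tau -> exists Q2 y2, [/\ step Q1 l Q2, nfe Q2 (y2 :: others),
      0 < size y2, plain y2 & obsw m y2 = os]].
Proof.
elim: y Q => [|e t IH] Q //=; move=> [He Ht] Eo HQ.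
have W : forall w ko Q0, validW u v w -> obs m (cW w ko) = obs m e -> tsteps Q Q0 ->
    nfe Q0 ((cW w ko :: t) :: others) ->
  exists Q1 y1, [/\ tsteps Q Q1, nfe Q1 (y1 :: others), 0 < size y1 /\ plain y1,
    obsw m y1 = o :: os &
    forall l, l = o \/ l = tau -> exists Q2 y2, [/\ step Q1 l Q2, nfe Q2 (y2 :: others),
      0 < size y2, plain y2 & obsw m y2 = os]].
  move=> w ko Q0 Hv Eob T0 N0; case E: (obs m (cW w ko)) => [|o1 os1].
    have [Q1' [T1 N1]] := killW Hv N0.
    have Et : obsw m t = o :: os.
      by have Eo' : obs m e ++ obsw m t = o :: os := Eo; rewrite -Eob E in Eo'.
    have Hst : 0 < size t by move: Et; clear; case: t.
    rewrite thr_ne // in N1.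
    have [Q1 [y1 [T2 N2 SP2 O2 F2]]] := IH _ Ht Et N1.
    exists Q1, y1; split => //; exact: ts_trans T0 (ts_trans T1 T2).
  have Eo' : obs m e ++ obsw m t = o :: os := Eo; rewrite -Eob E in Eo'.
  case: Eo' => Eo1 Eos; subst o1 os.
  exists Q0, (cW w ko :: t); split => //.
    by change (obs m (cW w ko) ++ obsw m t = o :: os1 ++ obsw m t); rewrite E.
  move=> l Hl; have [w' [ko' [R1 V1 O1]]] := wready Hv E Hl.
  have [Q2 [S2 N2]] := mv_c N0 R1.
  exists Q2, (cW w' ko' :: t); split => //.
  by change (obs m (cW w' ko') ++ obsw m t = os1 ++ obsw m t); rewrite O1.
destruct e as [| | | | | | | | | | | | |k|k|w ko]; try done.
- have [Q0 [S0 N0]] := mv_c HQ (r_U u v k).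
  apply: (W _ _ Q0 (validW_u k) _ (ts_one S0) N0).
  by clear; case: m.
- have [Q0 [S0 N0]] := mv_c HQ (r_V u v k).
  apply: (W _ _ Q0 (validW_v k) _ (ts_one S0) N0).
  by clear; case: m.
- exact: (W w ko Q He erefl (ts_refl _ _ _) HQ).
Qed.

Definition relT m (x y : thread) : Prop :=
  (exists x' y', [/\ x = cGv :: x', y = cGv :: y', plain x', plain y' & obsw m x' = obsw m y'])
  \/ (exists x' y', [/\ x = cZ :: x', y = cZ :: y', plain x', plain y' & obsw m x' = obsw m y'])
  \/ [/\ plain x, plain y & obsw m x = obsw m y].

Definition isS m (P : proc) (x : thread) := nfe P ([:: ctx m] :: thr x).
Definition RS m P Q := exists x y, [/\ isS m P x, isS m Q y & relT m x y].
Definition Rb m P Q := RS m P Q \/ (isK P /\ isK Q) \/ scong P Q.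

Lemma relT_sym m x y : relT m x y -> relT m y x.
Proof.
case=> [[x' [y' [-> -> H1 H2 H3]]]|[[x' [y' [-> -> H1 H2 H3]]]|[H1 H2 H3]]].
- by left; exists y', x'; split.
- by right; left; exists y', x'; split.
- by right; right; split.
Qed.

Lemma relT_good m x y : relT m x y -> good x /\ good y.
Proof.
case=> [[x' [y' [-> -> H1 H2 H3]]]|[[x' [y' [-> -> H1 H2 H3]]]|[H1 H2 H3]]].
- by split; right; [exists cGv, x' | exists cGv, y']; split => //; split => //; left.
- by split; right; [exists cZ, x' | exists cZ, y']; split => //; split => //; right; left.
- by split; left.
Qed.

Lemma perm_S (a : const) (x : thread) (c : const) (rest : thread) (others : seq thread) :
  Permutation ([:: a] :: thr x) ((c :: rest) :: others) ->
  (c = a /\ rest = [::] /\ others = thr x) \/ (c :: rest = x /\ others = [:: [:: a]]).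
Proof.
case: x => [|e x] /= H.
  by have := Permutation_length_1_inv H; case=> -> -> ->; left.
by case: (Permutation_length_2_inv H) => [[-> -> ->]|[-> -> ->]]; [left|right].
Qed.

Lemma isS_cons m P e t : nfe P ((e :: t) :: [:: [:: ctx m]]) -> isS m P (e :: t).
Proof. by move=> H; apply: nfe_perm H (perm_sw _ _ _). Qed.
Lemma isS_thr m P t : nfe P (thr t ++ [:: [:: ctx m]]) -> isS m P t.
Proof. by move=> H; apply: nfe_perm H (Permutation_app_comm _ _). Qed.
Lemma isS_act m P e t : isS m P (e :: t) -> nfe P ((e :: t) :: [:: [:: ctx m]]).
Proof. by move=> H; apply: nfe_perm H (perm_sw _ _ _). Qed.

Definition simgoal m P Q (l : act) P' :=
  (exists Q'' Q', [/\ tsteps Q Q'', step Q'' l Q', Rb m P Q'' & Rb m P' Q']) \/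
  (l = tau /\ Rb m P' Q).

Lemma stut_case m P Q P' (x2 y : thread) l : l = tau -> isS m P' x2 -> isS m Q y ->
  plain x2 -> plain y -> obsw m x2 = obsw m y -> simgoal m P Q l P'.
Proof. by move=> -> H1 H2 H3 H4 H5; right; split => //; left; exists x2, y; split => //; right; right. Qed.

Lemma abs_case m P Q P' (x y x2 : thread) l : RS m P Q -> isS m Q y ->
  rule (ctx m) l (Cst (ctx m)) -> isS m P' x2 -> plain x2 -> plain y ->
  obsw m x2 = obsw m y -> simgoal m P Q l P'.
Proof.
move=> HR Hy Hr H2 P2 Py O2; left.
have [Q' [S1 N1]] := mv_c Hy Hr.
exists Q, Q'; split => //; first exact: ts_refl; first by left.
by left; exists x2, y; split => //; right; right.
Qed.

Lemma adv_case m P Q P' (x y x2 : thread) l o : isS m P x -> isS m Q y -> plain x -> plain y ->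
  obsw m x = obsw m y -> obsw m x = o :: obsw m x2 -> (l = o \/ l = tau) ->
  isS m P' x2 -> plain x2 -> simgoal m P Q l P'.
Proof.
move=> Hx Hy Px Py Oxy Ox Hl H2 P2; left.
case: y Hy Py Oxy => [|e y] Hy Py Oxy; first by rewrite Oxy in Ox.
have N := isS_act Hy; rewrite Oxy in Ox.
have [Q1 [y1 [T1 N1 [S1 P1] O1 F1]]] := advance Py Ox N.
have [Q2 [y2 [S2 N2 S2' P2' O2]]] := F1 _ Hl.
exists Q1, Q2; split => //.
  left; exists x, y1; split => //; last by right; right; split => //; rewrite O1 -Ox Oxy.
  by case: y1 N1 S1 {O1 P1} => // e1 y1 N1 _; apply: isS_cons.
left; exists x2, y2; split => //; last by right; right; split => //; rewrite O2.
by case: y2 N2 S2' {O2 P2'} => // e2 y2 N2 _; apply: isS_cons.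
Qed.


Lemma plain_rule c l R : plainc c -> rule c l R ->
  (exists k, [/\ c = cU k, l = tau & R = Cst (cW (u k) (Some k))]) \/
  (exists k, [/\ c = cV k, l = tau & R = Cst (cW (v k) (Some k))]) \/
  (exists a w ko, [/\ c = cW (a :: w) ko, l = aL a \/ l = tau, R = Cst (cW w ko) &
     validW u v (a :: w)]) \/
  (exists w k, [/\ c = cW w (Some k), l = aN k \/ l = tau, R = Cst (cW w None) & validW u v w]) \/
  [/\ c = cW [::] None, l = tau & R = Eps].
Proof.
move=> Hc HR; destruct HR; simpl in Hc; try contradiction.
- by left; exists k.
- by right; left; exists k.
- by right; right; left; exists a, w, ko; split => //; left.
- by right; right; right; left; exists w, k; split => //; left.
- by right; right; left; exists a, w, ko; split => //; right.
- by right; right; right; left; exists w, k; split => //; right.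
- by right; right; right; right.
Qed.

Lemma Gv_rule l R : rule cGv l R ->
  (exists k, l = tau /\ R = Seq (Cst cGv) (Cst (cV k))) \/ (l = tau /\ R = Eps) \/
  (l = lV /\ R = Cst cZ).
Proof. move=> HR; inversion HR; subst; [left; by exists k | by right; left | by right; right]. Qed.

Lemma Z_rule l R : rule cZ l R -> (l = tau \/ l = lZ) /\ R = Eps.
Proof. move=> HR; inversion HR; subst; split => //; by [left | right]. Qed.

Lemma ctx_rule m l R : rule (ctx m) l R -> exists d, R = Cst d /\ (d = ctx m \/ d = cC').
Proof. case: m => /= HR; inversion HR; subst; eexists; split; eauto. Qed.

Lemma RS_sim m P Q l P' x y : isS m P x -> isS m Q y -> relT m x y -> step P l P' ->
  simgoal m P Q l P'.
Proof.
move=> Hx Hy Hr Hs.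
have HRS : RS m P Q by exists x, y.
have [c [rest [others [R [Hp HR Ho]]]]] := step_inv' Hs Hx.
case: (perm_S Hp) => [[Ec [Er Eo]]|[Ex Eo]]; [subst c rest others | subst others].
  have [d [ER Hd]] := ctx_rule HR; subst R.
  rewrite res_cst in Ho.
  have [Q' [S1 N1]] := mv_c Hy HR.
  left; exists Q, Q'; split; [exact: ts_refl | exact: S1 | by left | ].
  case: Hd => Ed; subst d.
  + by left; exists x, y; split.
  + right; left; have [gx gy] := relT_good Hr.
    by split; [exists (thr x) | exists (thr y)]; split => //; apply: allg_thr.
subst x.
case: Hr => [[x' [y' [Ex Ey Px Py Oxy]]]|[[x' [y' [Ex Ey Px Py Oxy]]]|[Px Py Oxy]]].
- case: Ex => Ec Er; subst c rest y.
  case: (Gv_rule HR) => [[k [El ER]]|[[El ER]|[El ER]]]; subst l R.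
  + rewrite res_seq2 in Ho.
    have [Q' [S1 N1]] := mv_s (isS_act Hy) (r_Gv1 u v k).
    left; exists Q, Q'; split; [exact: ts_refl | exact: S1 | by left | ].
    left; exists (cGv :: cV k :: x'), (cGv :: cV k :: y'); split.
    * exact: isS_cons Ho.
    * exact: isS_cons N1.
    * left; exists (cV k :: x'), (cV k :: y'); split => //.
      by change (obs m (cV k) ++ obsw m x' = obs m (cV k) ++ obsw m y'); rewrite Oxy.
  + rewrite res_eps in Ho.
    have [Q' [S1 N1]] := mv_e (isS_act Hy) (r_Gv2 u v).
    left; exists Q, Q'; split; [exact: ts_refl | exact: S1 | by left | ].
    left; exists x', y'; split; [exact: isS_thr Ho | exact: isS_thr N1 | by right; right].
  + rewrite res_cst in Ho.
    have [Q' [S1 N1]] := mv_c (isS_act Hy) (r_Gv3 u v).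
    left; exists Q, Q'; split; [exact: ts_refl | exact: S1 | by left | ].
    left; exists (cZ :: x'), (cZ :: y'); split; [exact: isS_cons Ho | exact: isS_cons N1 | ].
    by right; left; exists x', y'.
- case: Ex => Ec Er; subst c rest y.
  case: (Z_rule HR) => [Hl ER]; subst R; rewrite res_eps in Ho.
  have [Q' [S1 N1]] : exists Q', step Q l Q' /\ nfe Q' (thr y' ++ [:: [:: ctx m]]).
    by case: Hl => ->; [apply: mv_e (isS_act Hy) (r_Z1 u v) | apply: mv_e (isS_act Hy) (r_Z2 u v)].
  left; exists Q, Q'; split; [exact: ts_refl | exact: S1 | by left | ].
  left; exists x', y'; split; [exact: isS_thr Ho | exact: isS_thr N1 | by right; right].
- case: Px => Hc Prest.
  case: (plain_rule Hc HR) =>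
    [[k [Ec El ER]]|[[k [Ec El ER]]|[[a [w [ko [Ec El ER Hv]]]]|[[w [k [Ec El ER Hv]]]|[Ec El ER]]]]];
    subst c R; try subst l.
  + rewrite res_cst in Ho.
    apply: (@stut_case m P Q P' (cW (u k) (Some k) :: rest) y) => //; first exact: isS_cons Ho.
      by split => //; apply: validW_u.
  + rewrite res_cst in Ho.
    apply: (@stut_case m P Q P' (cW (v k) (Some k) :: rest) y) => //; first exact: isS_cons Ho.
      by split => //; apply: validW_v.
  + rewrite res_cst in Ho; have HP' := isS_cons Ho.
    have Pl : plain (cW w ko :: rest) by split => //; apply: validW_tl Hv.
    destruct m.
    * by apply: (@adv_case true P Q P' _ y _ _ (aL a) Hx Hy (conj Hc Prest) Py Oxy _ El HP' Pl).
    * case: El => El; subst.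
      - exact: (@abs_case false P Q P' _ y _ _ HRS Hy (r_S2 u v a) HP' Pl Py Oxy).
      - exact: (stut_case P (erefl tau) HP' Hy Pl Py Oxy).
  + rewrite res_cst in Ho; have HP' := isS_cons Ho.
    have Pl : plain (cW w None :: rest) by split.
    destruct m.
    * case: El => El; subst.
      - exact: (@abs_case true P Q P' _ y _ _ HRS Hy (r_I2 u v k) HP' Pl Py Oxy).
      - exact: (stut_case P (erefl tau) HP' Hy Pl Py Oxy).
    * by apply: (@adv_case false P Q P' _ y _ _ (aN k) Hx Hy (conj Hc Prest) Py Oxy _ El HP' Pl).
  + rewrite res_eps in Ho; have HP' := isS_thr Ho.
    apply: (stut_case P (erefl tau) HP' Hy) => //.
    rewrite -Oxy; have E : obs m (cW [::] None) = [::] by case: (m).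
    by change (obsw m rest = obs m (cW [::] None) ++ obsw m rest); rewrite E.
Qed.









Lemma Rb_sym m P Q : Rb m P Q -> Rb m Q P.
Proof.
case=> [[x [y [H1 H2 H3]]]|[[H1 H2]|H]].
- by left; exists y, x; split => //; apply: relT_sym.
- by right; left.
- by right; right; apply: sc_sym.
Qed.

Lemma Rb_sim m P Q l P' : Rb m P Q -> step P l P' -> simgoal m P Q l P'.
Proof.
case=> [[x [y [H1 H2 H3]]]|[[H1 H2]|H]] Hs.
- exact: RS_sim H1 H2 H3 Hs.
- case: (K_sim H1 H2 Hs) => [[Q'' [Q' [T S K1 K2]]]|[El K]].
    left; exists Q'', Q'; split => //; first by right; left.
    by case: K2 => [[K3 K4]|K3]; [right; left | right; right].
  by right; split => //; right; left.
- left; exists Q, P'; split; first exact: ts_refl.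
  + by apply: st_cong (sc_sym H) Hs (sc_refl _).
  + by right; right.
  + by right; right; apply: sc_refl.
Qed.

Lemma Rb_branch m : branching_bisimulation u v (Rb m).
Proof.
move=> P Q H; split.
  move=> l P' Hs; case: (Rb_sim H Hs) => [[Q'' [Q' [T S H1 H2]]]|[El H1]].
    by left; exists Q'', Q'; split.
  by right.
move=> l Q' Hs; case: (Rb_sim (Rb_sym H) Hs) => [[P'' [P' [T S H1 H2]]]|[El H1]].
  by left; exists P'', P'; split => //; apply: Rb_sym.
by right; split => //; apply: Rb_sym.
Qed.

Lemma br_weak (B : proc -> proc -> Prop) : branching_bisimulation u v B -> weak_bisimulation u v B.
Proof.
move=> HB P Q H; have [H1 H2] := HB P Q H; split.
  move=> l P' Hs; case: (H1 l P' Hs) => [[Q'' [Q' [T S B1 B2]]]|[El B1]].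
    exists Q'; split => //; case: l Hs S => //= *; try (by exists Q'', Q'; split => //; apply: ts_refl).
    by apply: ts_trans T (ts_one _).
  by exists Q; split => //; subst l; apply: ts_refl.
move=> l Q' Hs; case: (H2 l Q' Hs) => [[P'' [P' [T S B1 B2]]]|[El B1]].
  exists P'; split => //; case: l Hs S => //= *; try (by exists P'', P'; split => //; apply: ts_refl).
  by apply: ts_trans T (ts_one _).
by exists P; split => //; subst l; apply: ts_refl.
Qed.


Inductive sub (A : Type) : seq A -> seq A -> Prop :=
  | sub_nil : sub [::] [::]
  | sub_skip x a b : sub a b -> sub a (x :: b)
  | sub_keep x a b : sub a b -> sub (x :: a) (x :: b).

Lemma sub_nil_l (A : Type) (b : seq A) : sub [::] b.
Proof. elim: b => [|x b IH]; [exact: sub_nil | exact: sub_skip]. Qed.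
Lemma sub_refl (A : Type) (a : seq A) : sub a a.
Proof. elim: a => [|x a IH]; [exact: sub_nil | exact: sub_keep]. Qed.
Lemma sub_trans (A : Type) (a b c : seq A) : sub a b -> sub b c -> sub a c.
Proof.
move=> H1 H2; elim: H2 a H1 => {b c} [|x b c _ IH|x b c _ IH] a H1.
- inversion H1; exact: sub_nil.
- by apply: sub_skip; apply: IH.
- inversion H1; subst; first by apply: sub_skip; apply: IH.
  by apply: sub_keep; apply: IH.
Qed.
Lemma sub_size (A : Type) (a b : seq A) : sub a b -> size a <= size b.
Proof. by elim=> [|x a' b' _ IH|x a' b' _ IH] //=; apply: leqW. Qed.
Lemma sub_eq (A : Type) (a b : seq A) : sub a b -> size b <= size a -> a = b.
Proof.
elim=> [//|x a' b' H _ | x a' b' _ IH] /= Hs.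
  by have := leq_trans Hs (sub_size H); rewrite ltnn.
by rewrite IH.
Qed.
Lemma sub_app_r (A : Type) (a b c : seq A) : sub a b -> sub (a ++ c) (b ++ c).
Proof.
elim=> [|x a' b' _ IH|x a' b' _ IH] /=; [exact: sub_refl | exact: sub_skip | exact: sub_keep].
Qed.
Lemma sub_skipl (A : Type) (a c : seq A) : sub c (a ++ c).
Proof. elim: a => [|x a IH] /=; [exact: sub_refl | exact: sub_skip]. Qed.

Definition isobs m (o : act) : Prop :=
  if m then exists a, o = aL a else exists k, o = aN k.

Lemma ctx_rule2 m l R : rule (ctx m) l R ->
  (l = lI \/ l = lS) \/ (if m then exists k, l = aN k else exists a, l = aL a).
Proof. case: m => /= HR; inversion HR; subst; eauto. Qed.

Lemma obs_sub1 m a w ko : sub (obs m (cW w ko)) (obs m (cW (a :: w) ko)).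
Proof. case: m => /=; [apply: sub_skip; exact: sub_refl | exact: sub_refl]. Qed.
Lemma obs_sub2 m w k : sub (obs m (cW w None)) (obs m (cW w (Some k))).
Proof. case: m => /=; [exact: sub_refl | apply: sub_skip; exact: sub_refl]. Qed.

Lemma T1 m P P' y : step P tau P' -> isS m P y -> plain y ->
  exists y', [/\ isS m P' y', plain y' & sub (obsw m y') (obsw m y)].
Proof.
move=> Hs Hy Py.
have [c [rest [others [R [Hp HR Ho]]]]] := step_inv' Hs Hy.
case: (perm_S Hp) => [[Ec [Er Eo]]|[Ex Eo]]; [subst c rest others | subst others y].
  by case: (ctx_rule2 HR) => [[]|]; case: (m) => // [[k]|[a]].
case: Py => Hc Prest.
case: (plain_rule Hc HR) =>
  [[k [Ec El ER]]|[[k [Ec El ER]]|[[a [w [ko [Ec El ER Hv]]]]|[[w [k [Ec El ER Hv]]]|[Ec El ER]]]]];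
  subst c R.
- rewrite res_cst in Ho; exists (cW (u k) (Some k) :: rest); split.
  + exact: isS_cons Ho.
  + by split => //; apply: validW_u.
  + exact: sub_refl.
- rewrite res_cst in Ho; exists (cW (v k) (Some k) :: rest); split.
  + exact: isS_cons Ho.
  + by split => //; apply: validW_v.
  + exact: sub_refl.
- rewrite res_cst in Ho; exists (cW w ko :: rest); split.
  + exact: isS_cons Ho.
  + by split => //; apply: validW_tl Hv.
  + exact: (sub_app_r _ (obs_sub1 m a w ko)).
- rewrite res_cst in Ho; exists (cW w None :: rest); split.
  + exact: isS_cons Ho.
  + by split.
  + exact: (sub_app_r _ (obs_sub2 m w k)).
- rewrite res_eps in Ho; exists rest; split.
  + exact: isS_thr Ho.
  + by [].
  + by case: (m); apply: sub_refl.
Qed.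

Lemma T2 m P P' y o : step P o P' -> isobs m o -> isS m P y -> plain y ->
  exists y', [/\ isS m P' y', plain y' & sub (o :: obsw m y') (obsw m y)].
Proof.
move=> Hs Ho' Hy Py.
have [c [rest [others [R [Hp HR Ho]]]]] := step_inv' Hs Hy.
case: (perm_S Hp) => [[Ec [Er Eo]]|[Ex Eo]]; [subst c rest others | subst others y].
  move: Ho'; case: (ctx_rule2 HR) => [[->|->]|]; case: (m) => //.
  - by case=> ? ?.
  - by case=> ? ?.
  - by case=> ? ?.
  - by case=> ? ?.
  - by case=> k -> [a].
  - by case=> a -> [k].
case: Py => Hc Prest.
case: (plain_rule Hc HR) =>
  [[k [Ec El ER]]|[[k [Ec El ER]]|[[a [w [ko [Ec El ER Hv]]]]|[[w [k [Ec El ER Hv]]]|[Ec El ER]]]]];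
  subst c R.
- by move: Ho'; rewrite El; case: (m) => [[? ?]|[? ?]].
- by move: Ho'; rewrite El; case: (m) => [[? ?]|[? ?]].
- case: El => El; last by move: Ho'; rewrite El; case: (m) => [[? ?]|[? ?]].
  subst o; rewrite res_cst in Ho; exists (cW w ko :: rest); split.
  + exact: isS_cons Ho.
  + by split => //; apply: validW_tl Hv.
  + by move: Ho'; case: (m) => [_|[? ?]] //; apply: sub_refl.
- case: El => El; last by move: Ho'; rewrite El; case: (m) => [[? ?]|[? ?]].
  subst o; rewrite res_cst in Ho; exists (cW w None :: rest); split.
  + exact: isS_cons Ho.
  + by split.
  + by move: Ho'; case: (m) => [[? ?]|_] //; apply: sub_refl.
- by move: Ho'; rewrite El; case: (m) => [[? ?]|[? ?]].
Qed.



Lemma ctx_not m l R : rule (ctx m) l R -> [/\ l <> tau, l <> lZ & l <> lV].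
Proof.
move=> HR; by case: (ctx_rule2 HR) => [[->|->]|]; case: (m) => //; [case=> k ->|case=> a ->].
Qed.

Lemma T3 m P P' l y : step P l P' -> isS m P y -> plain y -> l = lZ \/ l = lV -> False.
Proof.
move=> Hs Hy Py Hl.
have [c [rest [others [R [Hp HR Ho]]]]] := step_inv' Hs Hy.
case: (perm_S Hp) => [[Ec [Er Eo]]|[Ex Eo]]; [subst c rest others | subst others y].
  by case: (ctx_not HR) => H1 H2 H3; case: Hl.
case: Py => Hc Prest.
case: (plain_rule Hc HR) =>
  [[k [Ec El ER]]|[[k [Ec El ER]]|[[a [w [ko [Ec El ER Hv]]]]|[[w [k [Ec El ER Hv]]]|[Ec El ER]]]]];
  subst c R; try subst l; case: Hl => E; try subst l; try discriminate;
  case: El => E'; discriminate.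
Qed.

Lemma T4 m P P' l y : step P l P' -> isS m P (cZ :: y) -> (l = tau \/ l = lZ) -> isS m P' y.
Proof.
move=> Hs Hy Hl.
have [c [rest [others [R [Hp HR Ho]]]]] := step_inv' Hs Hy.
case: (perm_S Hp) => [[Ec [Er Eo]]|[Ex Eo]]; [subst c rest others | subst others].
  by case: (ctx_not HR) => H1 H2 H3; case: Hl.
case: Ex => Ec Er; subst c rest.
case: (Z_rule HR) => _ ER; subst R; rewrite res_eps in Ho; exact: isS_thr Ho.
Qed.

Lemma T6 m P P' l y : step P l P' -> isS m P (cGv :: y) -> (l = tau \/ l = lV) ->
  (l = tau /\ ((exists k, isS m P' (cGv :: cV k :: y)) \/ isS m P' y)) \/
  (l = lV /\ isS m P' (cZ :: y)).
Proof.
move=> Hs Hy Hl.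
have [c [rest [others [R [Hp HR Ho]]]]] := step_inv' Hs Hy.
case: (perm_S Hp) => [[Ec [Er Eo]]|[Ex Eo]]; [subst c rest others | subst others].
  by case: (ctx_not HR) => H1 H2 H3; case: Hl.
case: Ex => Ec Er; subst c rest.
case: (Gv_rule HR) => [[k [El ER]]|[[El ER]|[El ER]]]; subst l R.
- by left; split => //; left; exists k; rewrite res_seq2 in Ho; apply: isS_cons Ho.
- by left; split => //; right; rewrite res_eps in Ho; apply: isS_thr Ho.
- by right; split => //; rewrite res_cst in Ho; apply: isS_cons Ho.
Qed.

Lemma MT1 m P P' y : tsteps P P' -> isS m P y -> plain y ->
  exists y', [/\ isS m P' y', plain y' & sub (obsw m y') (obsw m y)].
Proof.
move=> T; elim: T y => [P0|P0 P1 Q0 H T IH] y Hy Py.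
  by exists y; split => //; apply: sub_refl.
have [y1 [H1 P1' S1]] := T1 H Hy Py.
have [y2 [H2 P2 S2]] := IH _ H1 P1'.
by exists y2; split => //; apply: sub_trans S2 S1.
Qed.

Lemma MTZ m P P' y : tsteps P P' -> isS m P (cZ :: y) -> plain y ->
  isS m P' (cZ :: y) \/ exists y', [/\ isS m P' y', plain y' & sub (obsw m y') (obsw m y)].
Proof.
case=> [P0|P0 P1 Q0 H T] Hy Py; first by left.
right; have H1 := T4 H Hy (or_introl erefl); exact: MT1 T H1 Py.
Qed.

Lemma MTGv m P P' y : tsteps P P' -> isS m P (cGv :: y) -> plain y ->
  (exists w, isS m P' (cGv :: map cV w ++ y)) \/ exists y', isS m P' y' /\ plain y'.
Proof.
move=> T; elim: T y => [P0|P0 P1 Q0 H T IH] y Hy Py.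
  by left; exists [::].
case: (T6 H Hy (or_introl erefl)) => [[_ [[k Hk]|Hk]]|[E _]] //.
  case: (IH _ Hk) => // [[w Hw]|[y' [H1 H2]]]; last by right; exists y'.
  by left; exists (rcons w k); rewrite map_rcons -cats1 -catA.
have [y' [H1 H2 _]] := MT1 T Hk Py; by right; exists y'.
Qed.

Lemma wb_tsteps (B : proc -> proc -> Prop) P Q P1 : weak_bisimulation u v B -> B P Q ->
  tsteps P P1 -> exists Q1, tsteps Q Q1 /\ B P1 Q1.
Proof.
move=> Hw HB T; elim: T Q HB => [P0|P0 P2 Q0 H T IH] Q HB.
  by exists Q; split => //; apply: ts_refl.
have [Q2 [W2 B2]] := (Hw _ _ HB).1 _ _ H.
have [Q1 [T1 B1]] := IH _ B2; exists Q1; split => //; exact: ts_trans W2 T1.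
Qed.

Lemma wb_flip (B : proc -> proc -> Prop) : weak_bisimulation u v B ->
  weak_bisimulation u v (fun P Q => B Q P).
Proof. by move=> Hw P Q H; have [H1 H2] := Hw Q P H; split. Qed.

Lemma obsw_isobs m x o os : obsw m x = o :: os -> isobs m o.
Proof.
elim: x => [|e x IH] //.
change (obs m e ++ obsw m x = o :: os -> isobs m o).
case E: (obs m e) => [|o' os'] /=; first exact: IH.
case=> <- _; move: E.
destruct e as [| | | | | | | | | | | | |k|k|w ko]; case: (m) => //=.
- by case: (u k) => // a ? [<- _]; exists a.
- by case=> <- _; exists k.
- by case: (v k) => // a ? [<- _]; exists a.
- by case=> <- _; exists k.
- by case: w => // a ? [<- _]; exists a.
- by case: ko => // k [<- _]; exists k.
Qed.

Lemma trace m (B : proc -> proc -> Prop) : weak_bisimulation u v B ->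
  forall k x y P Q, size (obsw m x) <= k -> B P Q -> isS m P x -> isS m Q y ->
  plain x -> plain y -> sub (obsw m x) (obsw m y).
Proof.
move=> Hw; elim=> [|k IH] x y P Q Hsz HB Hx Hy Px Py;
  case Eo: (obsw m x) Hsz => [|o os] Hsz; try exact: sub_nil_l; first by [].
case: x Hx Px Eo => [|e x0] // Hx Px Eo.
have N := isS_act Hx.
have [P1 [x1 [T1' N1 [S1 P1'] O1 F1]]] := advance Px Eo N.
have [P2 [x2 [St N2 S2 Pl2 O2]]] := F1 o (or_introl erefl).
have Hio := obsw_isobs Eo.
have [Q1 [TQ1 B1]] := wb_tsteps Hw HB T1'.
have [Q2 [W2 B2]] := (Hw _ _ B1).1 _ _ St.
have [Qa [Qb [Ta Sb Tb]]] : exists Qa Qb, [/\ tsteps Q1 Qa, step Qa o Qb & tsteps Qb Q2].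
  move: Hio W2; case: (m) => /= [[a ->]|[k' ->]] /= [Pa [Pb [H1 H2 H3]]]; by exists Pa, Pb.
have [y1 [Hy1 Py1 Sy1]] := MT1 TQ1 Hy Py.
have [y2 [Hy2 Py2 Sy2]] := MT1 Ta Hy1 Py1.
have [y3 [Hy3 Py3 Sy3]] := T2 Sb Hio Hy2 Py2.
have [y4 [Hy4 Py4 Sy4]] := MT1 Tb Hy3 Py3.
have HP2 : isS m P2 x2 by case: x2 N2 S2 {Pl2 O2} => // e2 x2 N2 _; apply: isS_cons.
have Hk : size (obsw m x2) <= k by rewrite O2; exact: Hsz.
have Hsub := IH x2 y4 P2 Q2 Hk B2 HP2 Hy4 Pl2 Py4.
rewrite O2 in Hsub.
apply: sub_trans (sub_keep o Hsub) _.
apply: sub_trans (sub_keep o Sy4) _.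
apply: sub_trans Sy3 _; exact: sub_trans Sy2 Sy1.
Qed.

Lemma sub_anti (A : Type) (a b : seq A) : sub a b -> sub b a -> a = b.
Proof. by move=> H1 H2; apply: sub_eq H1 (sub_size H2). Qed.

Lemma ZL m (B : proc -> proc -> Prop) P Q x y : weak_bisimulation u v B -> B P Q ->
  isS m P (cZ :: x) -> isS m Q (cZ :: y) -> plain x -> plain y -> sub (obsw m x) (obsw m y).
Proof.
move=> Hw HB Hx Hy Px Py.
have [P1 [S1 N1]] := mv_e (isS_act Hx) (r_Z1 u v).
have HP1 := isS_thr N1.
have [Q1 [W1 B1]] := (Hw _ _ HB).1 _ _ S1.
case: (MTZ W1 Hy Py) => [HQ1|[y' [HQ1 Py' Sy]]].
  have [Q2 [S2 N2]] := mv_e (isS_act HQ1) (r_Z2 u v).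
  have [P2 [[Pa [Pb [Ta Sa Tb]]] B2]] := (Hw _ _ B1).2 _ _ S2.
  have [x' [Hx' Px' _]] := MT1 Ta HP1 Px.
  by case: (T3 Sa Hx' Px' (or_introl erefl)).
apply: (sub_trans _ Sy). exact: (trace Hw (leqnn _) B1 HP1 HQ1 Px Py').
Qed.

Lemma obsw_cat m a b : obsw m (a ++ b) = obsw m a ++ obsw m b.
Proof. by rewrite /obsw map_cat flatten_cat. Qed.

Lemma plain_mapV w : plain (map cV w).
Proof. by elim: w. Qed.

Lemma GvL m (B : proc -> proc -> Prop) P Q x y : weak_bisimulation u v B -> B P Q ->
  isS m P (cGv :: x) -> isS m Q (cGv :: y) -> plain x -> plain y ->
  exists w, obsw m x = obsw m (map cV w) ++ obsw m y.
Proof.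
move=> Hw HB Hx Hy Px Py.
have [P1 [S1 N1]] := mv_c (isS_act Hx) (r_Gv3 u v).
have HP1 := isS_cons N1.
have [Q1 [[Qa [Qb [Ta Sa Tb]]] B1]] := (Hw _ _ HB).1 _ _ S1.
case: (MTGv Ta Hy Py) => [[w Hw']|[y' [Hy' Py']]]; last first.
  by case: (T3 Sa Hy' Py' (or_intror erefl)).
have Pw : plain (map cV w ++ y) by apply/plain_cat; split => //; apply: plain_mapV.
case: (T6 Sa Hw' (or_intror erefl)) => [[E _]|[_ Hb]] //.
case: (MTZ Tb Hb Pw) => [HQ1|[y' [HQ1 Py' _]]].
  exists w; rewrite -obsw_cat; apply: sub_anti.
    exact: ZL Hw B1 HP1 HQ1 Px Pw.
  exact: ZL (wb_flip Hw) B1 HQ1 HP1 Pw Px.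
have [P2 [S2 N2]] := mv_e (isS_act HP1) (r_Z2 u v).
have [Q2 [[Qc [Qd [Tc Sc Td]]] B2]] := (Hw _ _ B1).1 _ _ S2.
have [y'' [Hy'' Py'' _]] := MT1 Tc HQ1 Py'.
by case: (T3 Sc Hy'' Py'' (or_introl erefl)).
Qed.

Lemma core m (B : proc -> proc -> Prop) P Q hd xs ys : weak_bisimulation u v B -> B P Q ->
  (hd = [::] \/ hd = [:: cZ] \/ hd = [:: cGv]) -> isS m P (hd ++ xs) -> isS m Q (hd ++ ys) ->
  plain xs -> plain ys -> obsw m xs = obsw m ys.
Proof.
move=> Hw HB [->|[->|->]] /= Hx Hy Px Py.
- apply: sub_anti; first exact: (trace Hw (leqnn _) HB Hx Hy Px Py).
  exact: (trace (wb_flip Hw) (leqnn _) HB Hy Hx Py Px).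
- apply: sub_anti; first exact: ZL Hw HB Hx Hy Px Py.
  exact: ZL (wb_flip Hw) HB Hy Hx Py Px.
- have [w1 E1] := GvL Hw HB Hx Hy Px Py.
  have [w2 E2] := GvL (wb_flip Hw) HB Hy Hx Py Px.
  have := congr1 size E1; rewrite E2 !size_cat addnA => /eqP.
  rewrite -{1}[size (obsw m xs)]add0n eqn_add2r eq_sym addn_eq0 => /andP [_ /eqP].
  by move/size0nil => Ew; rewrite E1 Ew.
Qed.


Lemma init_isS m (B : proc) (hd L : seq const) :
  (B = Eps /\ hd = [::]) \/ (B = Cst cZ /\ hd = [:: cZ]) \/ (B = Cst cGv /\ hd = [:: cGv]) ->
  isS m (Par (Cst (ctx m)) (Seq B (seqp L))) (hd ++ L).
Proof.
rewrite /isS /nfe /= nf_seqp.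
by case=> [[-> ->]|[[-> ->]|[-> ->]]] /=; case: L => [|e L] /=; apply: Permutation_refl.
Qed.

Lemma plain_UV (ps : seq ('I_n + 'I_n)) : plain (map (@UV Sg n) ps).
Proof. by elim: ps => [|[k|k] ps IH]. Qed.
Lemma plain_U (is_ : seq 'I_n) : plain (map (@cU Sg n) is_).
Proof. by elim: is_. Qed.
Lemma plain_V (is_ : seq 'I_n) : plain (map (@cV Sg n) is_).
Proof. by elim: is_. Qed.

Lemma cat_injl (A : Type) (p a b : seq A) : p ++ a = p ++ b -> a = b.
Proof. by elim: p => [|x p IH] //= [/IH]. Qed.

Lemma map_injl (A B : Type) (f : A -> B) : injective f -> injective (map f).
Proof.
move=> Hf; elim=> [|x a IH] [|y b] //= [E1 E2].
by rewrite (Hf _ _ E1) (IH _ E2).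
Qed.

Lemma main_iff m (B : proc) (hd L1 L2 : seq const)
  (eqv : proc -> proc -> Prop) :
  (B = Eps /\ hd = [::]) \/ (B = Cst cZ /\ hd = [:: cZ]) \/ (B = Cst cGv /\ hd = [:: cGv]) ->
  (eqv = branching_bisimilar u v \/ eqv = weakly_bisimilar u v) ->
  plain L1 -> plain L2 ->
  (eqv (Par (Cst (ctx m)) (Seq B (seqp L1))) (Par (Cst (ctx m)) (Seq B (seqp L2))) <->
   obsw m L1 = obsw m L2).
Proof.
move=> HB He P1 P2.
have Hhd : hd = [::] \/ hd = [:: cZ] \/ hd = [:: cGv].
  by case: HB => [[_ ->]|[[_ ->]|[_ ->]]]; tauto.
have I1 := init_isS m L1 HB; have I2 := init_isS m L2 HB.
split.
  move=> H.
  have [Bw [Hw HBw]] : exists Bw, weak_bisimulation u v Bw /\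
      Bw (Par (Cst (ctx m)) (Seq B (seqp L1))) (Par (Cst (ctx m)) (Seq B (seqp L2))).
    case: He => E; subst eqv; case: H => Bw [Hw HBw]; exists Bw; split => //.
    exact: br_weak.
  exact: core Hw HBw Hhd I1 I2 P1 P2.
move=> Ho.
have HR : Rb m (Par (Cst (ctx m)) (Seq B (seqp L1))) (Par (Cst (ctx m)) (Seq B (seqp L2))).
  left; exists (hd ++ L1), (hd ++ L2); split => //.
  case: Hhd => [->|[->|->]] /=.
  - by right; right.
  - by right; left; exists L1, L2.
  - by left; exists L1, L2.
case: He => E; subst eqv; exists (Rb m); split => //.
  exact: Rb_branch.
apply: br_weak. exact: Rb_branch.
Qed.

End NF.







Lemma obsw_split (Sg : eqType) n (u v : 'I_n -> seq Sg) m (ps : seq ('I_n + 'I_n)) is_ js :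
  obsw u v m (map (@UV Sg n) ps ++ map (@cU Sg n) is_) =
  obsw u v m (map (@UV Sg n) ps ++ map (@cV Sg n) js) <->
  obsw u v m (map (@cU Sg n) is_) = obsw u v m (map (@cV Sg n) js).
Proof.
rewrite !obsw_cat; split; first exact: cat_injl.
by move=> ->.
Qed.

Lemma obsw_UI (Sg : eqType) n (u v : 'I_n -> seq Sg) is_ :
  obsw u v true (map (@cU Sg n) is_) = map aL (flatten (map u is_)).
Proof. by elim: is_ => [|k is_ IH] //=; rewrite map_cat -IH. Qed.
Lemma obsw_VI (Sg : eqType) n (u v : 'I_n -> seq Sg) js :
  obsw u v true (map (@cV Sg n) js) = map aL (flatten (map v js)).
Proof. by elim: js => [|k js IH] //=; rewrite map_cat -IH. Qed.
Lemma obsw_US (Sg : eqType) n (u v : 'I_n -> seq Sg) is_ :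
  obsw u v false (map (@cU Sg n) is_) = map aN is_.
Proof. by elim: is_ => [|k is_ IH] //=; rewrite -IH. Qed.
Lemma obsw_VS (Sg : eqType) n (u v : 'I_n -> seq Sg) js :
  obsw u v false (map (@cV Sg n) js) = map aN js.
Proof. by elim: js => [|k js IH] //=; rewrite -IH. Qed.

Theorem lemma5 (Sg : finType) (n : nat) (u v : 'I_n -> seq Sg)
  (hSg : 2 <= #|Sg|)
  (hu : forall k, 0 < size (u k)) (hv : forall k, 0 < size (v k))
  (is_ js : seq 'I_n) (B : proc Sg n)
  (hB : B = Eps \/ B = Cst cZ \/ B = Cst cGv)
  (ps : seq ('I_n + 'I_n))
  (eqv : proc Sg n -> proc Sg n -> Prop)
  (heqv : eqv = branching_bisimilar u v \/ eqv = weakly_bisimilar u v) :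
  let BPU := Seq B (seqp (map (@UV Sg n) ps ++ map (@cU Sg n) is_)) in
  let BPV := Seq B (seqp (map (@UV Sg n) ps ++ map (@cV Sg n) js)) in
  (eqv (Par (Cst cI) BPU) (Par (Cst cI) BPV) <->
     flatten (map u is_) = flatten (map v js)) /\
  (eqv (Par (Cst cS) BPU) (Par (Cst cS) BPV) <-> is_ = js).
Proof.
move=> BPU BPV.
have [hd Hhd] : exists hd : seq (const Sg n),
    (B = Eps /\ hd = [::]) \/ (B = Cst cZ /\ hd = [:: cZ]) \/ (B = Cst cGv /\ hd = [:: cGv]).
  case: hB => [->|[->|->]]; [exists [::] | exists [:: cZ] | exists [:: cGv]]; tauto.
have PL1 : plain u v (map (@UV Sg n) ps ++ map (@cU Sg n) is_).
  by apply/plain_cat; split; [apply: plain_UV | apply: plain_U].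
have PL2 : plain u v (map (@UV Sg n) ps ++ map (@cV Sg n) js).
  by apply/plain_cat; split; [apply: plain_UV | apply: plain_V].
have Hinj1 : injective (@aL Sg n) by move=> a b [].
have Hinj2 : injective (@aN Sg n) by move=> a b [].
split.
  have := main_iff true Hhd heqv PL1 PL2; rewrite obsw_split obsw_UI obsw_VI => H.
  apply: (iff_trans H); split; first exact: map_injl.
  by move=> ->.
have := main_iff false Hhd heqv PL1 PL2; rewrite obsw_split obsw_US obsw_VS => H.
apply: (iff_trans H); split; first exact: map_injl.
by move=> ->.
Qed.
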